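(* Let $n$ be even and $f:\mathbb{F}_{2^n}\to\mathbb{F}_{2^n}$ be an APN map with $f(0)=0$ such that every $y\in\mathrm{Im}(f)\setminus\{0\}$ has at least 3 preimages. Then $f$ is almost-3-to-1.
   Context: $f$ is APN if for every $a\neq 0$ and every $b$ the equation $f(x+a)+f(x)=b$ has at most 2 solutions. $f$ is almost-3-to-1 if there is a unique element of $\mathrm{Im}(f)$ with exactly one preimage and every other element of $\mathrm{Im}(f)$ has exactly 3 preimages. *)

(* Defs.v *)
From HB Require Import structures.
From mathcomp Require Import all_boot all_order all_algebra all_field.
Set Implicit Arguments. Unset Strict Implicit. Unset Printing Implicit Defensive.
Import GRing.Theory.
Local Open Scope ring_scope.

Definition npre (F : finFieldType) (f : F -> F) (y : F) : nat :=
  #|[set x : F | f x == y]|.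

Definition APN (F : finFieldType) (f : F -> F) : Prop :=
  forall a b : F, a != 0 -> (#|[set x : F | (f (x + a) + f x == b)%R]| <= 2)%N.

Definition almost_3_to_1 (F : finFieldType) (f : F -> F) : Prop :=
  exists y0 : F, [/\ y0 \in codom f, npre f y0 = 1%N &
    forall y, y \in codom f -> y != y0 -> npre f y = 3%N].

(* Main.v *)
Require Import Defs.
From mathcomp Require Import all_boot all_order all_algebra all_field.
From mathcomp Require Import zify.
Set Implicit Arguments. Unset Strict Implicit. Unset Printing Implicit Defensive.
Import GRing.Theory.
Local Open Scope ring_scope.

Lemma card_sum_b (T : finType) (P : pred T) :
  #|[set x | P x]| = (\sum_x (P x : nat))%N.
Proof.
rewrite cardsE -sum1_card big_mkcond /=; apply: eq_bigr => i _.
by rewrite unfold_in; case: (P i).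
Qed.

Lemma all3 (T : finType) (A : pred T) (g : T -> nat) :
  (forall i, A i -> 3 <= g i)%N -> (\sum_(i | A i) g i <= #|A| * 3)%N ->
  forall i, A i -> g i = 3%N.
Proof.
move=> H3 Hs i Ai; apply/eqP; rewrite eqn_leq H3 // andbT; apply/negP => /negP.
rewrite -ltnNge => H4.
move: Hs; rewrite (bigD1 i) //= (cardD1x Ai).
have : (#|[predD1 A & i]| * 3 <= \sum_(j | A j && (j != i)) g j)%N.
  have -> : (#|[predD1 A & i]| * 3 = \sum_(j | A j && (j != i)) 3)%N.
    by rewrite -sum_nat_const; apply: eq_bigl => j; rewrite !inE andbC.
  by apply: leq_sum => j /andP [Aj _]; exact: H3.
move=> H1; rewrite (_ : #|[pred i0 | A i0 & i0 != i]| = #|[predD1 A & i]|); first lia.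
by apply: eq_card => j; rewrite !inE andbC.
Qed.

Theorem proposition4p7 (F : finFieldType) (n : nat) (f : F -> F) :
  #|F| = (2 ^ n)%N -> ~~ odd n ->
  APN f -> f 0 = 0 ->
  (forall y, y \in codom f -> y != 0 -> (3 <= npre f y)%N) ->
  almost_3_to_1 f.
Proof.
move=> hcard hev hAPN f0 h3.
have ch2 : (2 \in [pchar F])%N by apply: (card_finPcharP hcard).
pose c x := npre f (f x).
have cE x : c x = (\sum_a (f (x + a)%R == f x : nat))%N.
  by rewrite /c /npre card_sum_b (reindex_inj (addrI x)).
have up : (\sum_x c x <= #|F| + #|F|.-1 * 2)%N.
  have -> : (\sum_x c x = \sum_x (1 + \sum_(a | a != 0%R) (f (x + a)%R == f x : nat)))%N.
    by apply: eq_bigr => x _; rewrite cE (bigD1 (0:F)) //= addr0 eqxx.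
  rewrite big_split /= sum1_card leq_add2l exchange_big /=.
  rewrite -(cardC1 (0 : F)) -sum_nat_const.
  apply: leq_sum => a a0.
  have -> : (\sum_x (f (x + a)%R == f x : nat) = #|[set x | (f (x + a) + f x == 0)%R]|)%N.
    rewrite card_sum_b; apply: eq_bigr => x _.
    by rewrite addr_eq0 oppr_pchar2.
  exact: hAPN.
pose Z := [set x | f x == 0].
pose m0 := #|Z|.
have cZ x : x \in Z -> c x = m0.
  by rewrite inE /c => /eqP ->.
have c3 x : x \notin Z -> (3 <= c x)%N.
  by rewrite inE => hx; apply: h3 => //; exact: codom_f.
have m0pos : (1 <= m0)%N by rewrite card_gt0; apply/set0Pn; exists 0; rewrite inE f0.
pose K := (\sum_(x | x \notin Z) c x)%N.
pose L := #|[predC Z]|.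
have hL : (m0 + L = #|F|)%N by rewrite cardC.
have hsplit : (\sum_x c x = m0 * m0 + K)%N.
  rewrite (bigID (fun x => x \in Z)) /=; congr (_ + _)%N.
  rewrite (eq_bigr (fun _ => m0)); last by move=> x hx; exact: cZ.
  by rewrite sum_nat_const.
have hK : (L * 3 <= K)%N.
  have -> : (L * 3 = \sum_(x | x \notin Z) 3)%N.
    by rewrite sum_nat_const; apply: f_equal2 => //; apply: eq_card => x; rewrite !inE.
  by apply: leq_sum => x hx; exact: c3.
have hm : m0 = 1%N \/ m0 = 2%N by nia.
have hK2 : (K <= #|[pred x | x \notin Z]| * 3)%N.
  rewrite (_ : #|[pred x | x \notin Z]| = L); last by apply: eq_card => x; rewrite !inE.
  case: hm => hm; nia.
have ceq := all3 (fun x => c3 x) hK2.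
have dL : (3 %| L)%N.
  rewrite /L -sum1_card (partition_big f (fun y => y != 0)) /=; last first.
    by move=> x; rewrite !inE.
  apply: dvdn_sum => y y0.
  rewrite sum1_card.
  case: (boolP (y \in codom f)) => [/codomP [x hyx] | ny]; first subst y.
    have -> : #|[pred i | (i \in [predC Z]) && (f i == f x)]| = c x.
      rewrite /c /npre cardsE; apply: eq_card => z; rewrite !inE.
      apply/andP/idP => [[_ hz] // | hz]; split => //.
      by move/eqP: hz => ->.
    rewrite ceq //; rewrite inE; apply/negP; move/eqP=> hx.
    by move: y0; rewrite hx eqxx.
  rewrite (eq_card0 (_ : _ =i pred0)) //.
  move=> z; rewrite !inE; apply/negP => /andP [_ /eqP hz].
  by move: ny; rewrite -hz codom_f.
have hmod : (#|F| %% 3 = 1)%N.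
  rewrite hcard -[n]odd_double_half (negbTE hev) add0n -muln2 mulnC expnM.
  by rewrite -modnXm /= exp1n.
have m01 : m0 = 1%N.
  case: hm => // hm; exfalso.
  move: dL hmod; rewrite -hL hm; lia.
exists 0; split.
- by rewrite -f0 codom_f.
- by rewrite /npre -/Z -/m0.
- move=> y /codomP [x ->] hy; apply: ceq; rewrite inE; exact: hy.
Qed.
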